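(* Let $\Gamma$ be a one-dimensional CW-complex and $n\ge1$. Two oriented edges $(e_1,S_1)$ and $(e_2,S_2)$ of $UC_n(\Gamma)$ are dual to the same oriented hyperplane if and only if $e_1=e_2$ and $S_1 \setminus \{ o(e_1)\}$, $S_2 \setminus \{ o(e_2) \}$ belong to the same connected component of $UC_{n-1}(\Gamma \setminus e_1)$.
   Context: $UC_n(\Gamma)$ is the cube complex whose vertices are the $n$-element subsets of the vertex set $\Gamma^{(0)}$, whose edges join $S_1,S_2$ when $S_1\triangle S_2$ is a pair of adjacent vertices, and where $n$ edges at a common vertex span an $n$-cube when the one-cells of $\Gamma$ labelling them are pairwise disjoint (no common endpoint). An oriented edge of $UC_n(\Gamma)$ is determined by a pair $(e,S)$ with $e$ an oriented edge of $\Gamma$ and $S$ an $n$-subset of vertices with $o(e)\in S$, $t(e)\notin S$; it goes from $S$ to $(S\setminus\{o(e)\})\cup\{t(e)\}$. Oriented hyperplanes are equivalence classes of oriented edges under the relation generated by being parallel (and identically oriented) opposite sides of a square. $\Gamma\setminus e$ denotes the subgraph of $\Gamma$ obtained by removing the (closed) edge $e$, i.e. its endpoints and all edges incident to them. *)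

(* Defs.v *)
From mathcomp Require Import all_boot.
From mathcomp Require Import finmap.
From Stdlib Require Import Relations.
Set Implicit Arguments. Unset Strict Implicit. Unset Printing Implicit Defensive.
Local Open Scope fset_scope.

(* A one-dimensional CW-complex Gamma: 0-cells of type V, 1-cells of type E,
   each 1-cell f having endpoints src f and tgt f (loops and multiple edges
   allowed; no finiteness assumed). *)
Section UC.
Variables (V : choiceType) (E : Type) (src tgt : E -> V).

Definition oedge := (E * bool)%type.
Definition o (e : oedge) : V := if e.2 then src e.1 else tgt e.1.
Definition t (e : oedge) : V := if e.2 then tgt e.1 else src e.1.

Definition disjoint_edges (a b : E) : Prop :=
  [/\ src a <> src b, src a <> tgt b, tgt a <> src b & tgt a <> tgt b].

Definition is_UC_edge (n : nat) (e : oedge) (S : {fset V}) : Prop :=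
  [/\ #|` S| = n, o e \in S & t e \notin S].

Definition move (e : oedge) (S : {fset V}) : {fset V} :=
  (S `\ o e) `|` [fset t e].

(* Elementary parallelism: (e,S) and (e, S') are opposite, identically
   oriented sides of a square of UC_n(Gamma), the square being spanned at S
   by (e,S) and (f,S) with e, f disjoint 1-cells. *)
Definition square_parallel (n : nat) (x y : oedge * {fset V}) : Prop :=
  [/\ y.1 = x.1, is_UC_edge n x.1 x.2 &
      exists f : oedge, [/\ is_UC_edge n f x.2, disjoint_edges x.1.1 f.1
                         & y.2 = move f x.2]].

Definition same_hyperplane (n : nat) (x y : oedge * {fset V}) : Prop :=
  clos_refl_sym_trans _ (square_parallel n) x y.

(* Gamma \ e (e a 1-cell): vertices that are not endpoints of e, and
   1-cells having no endpoint in common with e. *)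
Definition minus_vertex (e : E) (v : V) : Prop := v <> src e /\ v <> tgt e.
Definition minus_edge (e : E) (f : E) : Prop := disjoint_edges e f.

Definition UC_minus_step (e : E) (m : nat) (T T' : {fset V}) : Prop :=
  [/\ (forall v, v \in T -> minus_vertex e v) &
      exists f : oedge, [/\ minus_edge e f.1, is_UC_edge m f T & T' = move f T]].

Definition same_component_minus (e : E) (m : nat) (T T' : {fset V}) : Prop :=
  [/\ #|` T| = m, (forall v, v \in T -> minus_vertex e v) &
      clos_refl_sym_trans _ (UC_minus_step e m) T T'].

End UC.

(* Main.v *)
Require Import Defs.
From mathcomp Require Import all_boot.
From mathcomp Require Import finmap.
From Stdlib Require Import Relations.
Local Open Scope fset_scope.

Section H.
Variables (V : choiceType) (E : Type) (src tgt : E -> V).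
Local Notation o := (o src tgt).
Local Notation t := (t src tgt).

Lemma disj_ot (e f : oedge E) : disjoint_edges src tgt e.1 f.1 ->
  [/\ o e != o f, o e != t f, t e != o f & t e != t f].
Proof.
case: e f => [a []] [b []]; rewrite /Defs.o /Defs.t /= => [[h1 h2 h3 h4]];
split; apply/eqP => //; by move=> h; subst.
Qed.

Lemma avoid_ot v (e : oedge E) : minus_vertex src tgt e.1 v -> v != o e /\ v != t e.
Proof.
case: e => [a []] [h1 h2]; rewrite /Defs.o /Defs.t /=; split; apply/eqP => //.
Qed.

Lemma ot_avoid v (e : oedge E) : v != o e -> v != t e -> minus_vertex src tgt e.1 v.
Proof.
case: e => [a []]; rewrite /Defs.o /Defs.t /= => /eqP h1 /eqP h2; by split.
Qed.

Lemma card_move (f : oedge E) (S : {fset V}) : o f \in S -> t f \notin S ->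
  #|` move src tgt f S| = #|` S|.
Proof.
move=> h1 h2; rewrite /move fsetUC cardfsU1 (cardfsD1 (o f) S) h1 in_fsetD1 (negbTE h2) andbF.
by [].
Qed.

Lemma sp_step n (x y : oedge E * {fset V}) : square_parallel src tgt n x y ->
  x.1 = y.1 /\ UC_minus_step src tgt x.1.1 n.-1 (x.2 `\ o x.1) (y.2 `\ o y.1).
Proof.
case: x y => [e S] [e' S'] [] /= -> [hc ho ht] [f [[hfc hfo hft] hd ->]].
split=> //.
have [d1 d2 d3 d4] := @disj_ot e f hd.
split.
  move=> v /fsetD1P [hv hvS]; apply: (@ot_avoid v e) => //.
  by apply/eqP => hh; subst; rewrite hvS in ht.
exists f; split => //.
  split.
  - by move: hc; rewrite (cardfsD1 (o e) S) ho add1n => <-.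
  - by rewrite in_fsetD1 hfo eq_sym d1.
  - by rewrite in_fsetD1 (negbTE hft) andbF.
apply/fsetP => v; rewrite /move !inE.
have [->|hv] := eqVneq v (t f).
  by rewrite !orbT andbT eq_sym.
by rewrite !orbF andbCA.
Qed.

Lemma step_sp n (e : oedge E) T T' : 0 < n -> o e != t e ->
  UC_minus_step src tgt e.1 n.-1 T T' ->
  square_parallel src tgt n (e, o e |` T) (e, o e |` T').
Proof.
move=> hn het [hav [f [hd [hc hfo hft] ->]]].
have [d1 d2 d3 d4] := @disj_ot e f hd.
have oeT : o e \notin T by apply/negP => /hav /(@avoid_ot _ e) [/eqP].
have teT : t e \notin T by apply/negP => /hav /(@avoid_ot _ e) [_ /eqP].
have hUC : is_UC_edge src tgt n e (o e |` T).
  split.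
  - by rewrite cardfsU1 oeT hc add1n prednK.
  - by rewrite !inE eqxx.
  - by rewrite !inE negb_or teT eq_sym het.
split => //=.
exists f; split => //.
  split.
  - by rewrite cardfsU1 oeT hc add1n prednK.
  - by rewrite !inE hfo orbT.
  - by rewrite !inE negb_or hft eq_sym d2.
apply/fsetP => v; rewrite /move !inE.
have [->|hv] := eqVneq v (o e).
  by rewrite /= d1.
by [].
Qed.

End H.
Arguments disj_ot {V E src tgt e f}.
Arguments avoid_ot {V E src tgt v e}.
Arguments ot_avoid {V E src tgt v e}.
Arguments sp_step {V E src tgt n x y}.
Arguments step_sp {V E src tgt n e T T'}.

Theorem lemma3p6 (V : choiceType) (E : Type) (src tgt : E -> V) (n : nat)
  (hn : 1 <= n) (e1 e2 : oedge E) (S1 S2 : {fset V}) :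
  is_UC_edge src tgt n e1 S1 -> is_UC_edge src tgt n e2 S2 ->
  (same_hyperplane src tgt n (e1, S1) (e2, S2) <->
   e1 = e2 /\
   same_component_minus src tgt e1.1 n.-1
     (S1 `\ o src tgt e1) (S2 `\ o src tgt e2)).
Proof.
move=> [hc1 ho1 ht1] [hc2 ho2 ht2]; split.
- move=> H.
  have : (e1, S1).1 = (e2, S2).1 /\ clos_refl_sym_trans _
     (UC_minus_step src tgt (e1, S1).1.1 n.-1)
     ((e1, S1).2 `\ o src tgt (e1, S1).1) ((e2, S2).2 `\ o src tgt (e2, S2).1).
    elim: H => {e1 e2 S1 S2 ho1 ht1 hc1 ho2 ht2 hc2}.
    + move=> x y /sp_step [-> h]; split=> //; exact: rst_step.
    + move=> x; split=> //; exact: rst_refl.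
    + move=> x y _ [h1 h2]; split=> //; rewrite h1 in h2 *; exact: rst_sym.
    + move=> x y z _ [h1 h2] _ [h3 h4]; split; first by rewrite h1.
      rewrite h1 in h2 *; exact: rst_trans h2 h4.
  move=> /= [<- h]; split=> //; split=> //.
  + by move: hc1; rewrite (cardfsD1 (o src tgt e1) S1) ho1 add1n => <-.
  + move=> v /fsetD1P [hv hvS]; apply: ot_avoid => //.
    by apply/eqP => hh; subst; rewrite hvS in ht1.
- move=> [? [_ _ H]]; subst e2.
  have het : o src tgt e1 != t src tgt e1.
    by apply/eqP => hh; move: ht1; rewrite -hh ho1.
  rewrite -(fsetD1K ho1) -(fsetD1K ho2).
  move: H; move: (S1 `\ o src tgt e1) (S2 `\ o src tgt e1) => T1 T2 H.
  elim: H.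
  + move=> x y h; apply: rst_step; exact: (step_sp hn het h).
  + move=> x; exact: rst_refl.
  + move=> x y _ h; exact: rst_sym.
  + move=> x y z _ h1 _ h2; exact: rst_trans h2.
Qed.
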